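(* Let $\alpha,\beta,\gamma,\lambda,x$ be non-negative integers with $(\alpha,\beta,\gamma,\lambda,x)\neq(0,0,0,0,0)$. Then for every integer $n\ge0$, $$T_{n+1}^{\lambda,x}(\alpha,\beta,\gamma)=\gamma\,T_n^{\lambda,x}(\alpha,\beta,\gamma-\alpha)+x\beta\lambda\sum_{k=0}^{n}\binom{n}{k}T_k^{\lambda,x}(\alpha,\beta,\gamma)\,T_{n-k}^{1,x}(\alpha,\beta,\beta-\alpha).$$
   Context: For complex numbers $c,\alpha$ and an integer $n\ge 0$ let $(c|\alpha)_n=\prod_{i=0}^{n-1}(c-i\alpha)$, with $(c|\alpha)_0=1$. Let $E_{\alpha,c}(t)=\sum_{n\ge 0}(c|\alpha)_n\,t^n/n!$, viewed as a formal power series in $t$. It equals $(1+\alpha t)^{c/\alpha}$ if $\alpha\neq0$ and $e^{ct}$ if $\alpha=0$. For complex $\alpha,\beta,\gamma,x$ and a non-negative integer $\lambda$, the numbers $T_n^{\lambda,x}(\alpha,\beta,\gamma)$, $n\ge0$, are defined by the formal power series identity $$\sum_{n\ge0}T_n^{\lambda,x}(\alpha,\beta,\gamma)\frac{t^n}{n!}=E_{\alpha,\gamma}(t)\,\bigl(1-x(E_{\alpha,\beta}(t)-1)\bigr)^{-\lambda}.$$ The third argument may be any complex number. *)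

(* Defs.v *)
From HB Require Import structures.
From mathcomp Require Import all_boot all_order all_algebra all_field.
Set Implicit Arguments. Unset Strict Implicit. Unset Printing Implicit Defensive.
Import Order.TTheory GRing.Theory Num.Theory.
Local Open Scope ring_scope.

Definition fps := nat -> algC.

Definition fps_one : fps := fun n => if n == 0%N then 1 else 0.
Definition fps_const (c : algC) : fps := fun n => if n == 0%N then c else 0.
Definition fps_add (f g : fps) : fps := fun n => f n + g n.
Definition fps_opp (f : fps) : fps := fun n => - f n.
Definition fps_scale (c : algC) (f : fps) : fps := fun n => c * f n.
Definition fps_mul (f g : fps) : fps :=
  fun n => \sum_(k < n.+1) f k * g (n - k)%N.
Definition fps_pow (f : fps) (j : nat) : fps := iter j (fps_mul f) fps_one.

(* Multiplicative inverse of a series f with f 0 invertible: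
   f = f0 (1 - h) with h 0 = 0, so f^{-1} = f0^{-1} \sum_j h^j, and only the
   terms j <= n contribute to the n-th coefficient. *)
Definition fps_inv (f : fps) : fps :=
  let h := fps_add fps_one (fps_opp (fps_scale (f 0%N)^-1 f)) in
  fun n => (f 0%N)^-1 * \sum_(j < n.+1) fps_pow h j n.

Definition gfact (c alpha : algC) (n : nat) : algC :=
  \prod_(i < n) (c - i%:R * alpha).

Definition Eser (alpha c : algC) : fps := fun n => gfact c alpha n / n`!%:R.

Definition Tnum (lambda : nat) (x alpha beta gamma : algC) (n : nat) : algC :=
  n`!%:R *
  fps_mul (Eser alpha gamma)
    (fps_pow (fps_inv (fps_add fps_one
                 (fps_opp (fps_scale x (fps_add (Eser alpha beta) (fps_opp fps_one))))))
             lambda) n.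

(* Main.v *)
Require Import Defs.
From HB Require Import structures.
From mathcomp Require Import all_boot all_order all_algebra all_field.
From mathcomp Require Import boolp.
From mathcomp Require Import ring zify.
Import Order.TTheory GRing.Theory Num.Theory.
Local Open Scope ring_scope.

Lemma fps_ext (f g : fps) : (forall n, f n = g n) -> f = g.
Proof. move=> h; exact: functional_extensionality_dep h. Qed.

Definition fps_zero : fps := fun _ => 0.

HB.instance Definition _ := gen_eqMixin fps.
HB.instance Definition _ := gen_choiceMixin fps.

Lemma fps_addA : associative fps_add.
Proof. by move=> f g h; apply: fps_ext => n; rewrite /fps_add addrA. Qed.
Lemma fps_addC : commutative fps_add.
Proof. by move=> f g; apply: fps_ext => n; rewrite /fps_add addrC. Qed.
Lemma fps_add0 : left_id fps_zero fps_add.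
Proof. by move=> f; apply: fps_ext => n; rewrite /fps_add /fps_zero add0r. Qed.
Lemma fps_addN : left_inverse fps_zero fps_opp fps_add.
Proof. by move=> f; apply: fps_ext => n; rewrite /fps_add /fps_opp /fps_zero addNr. Qed.

HB.instance Definition _ := GRing.isZmodule.Build fps fps_addA fps_addC fps_add0 fps_addN.

Definition P (N : nat) (f : fps) : {poly algC} := \poly_(i < N) f i.

Lemma mul_coef (u v : fps) (p q : {poly algC}) n :
  (forall m, (m <= n)%N -> u m = p`_m) -> (forall m, (m <= n)%N -> v m = q`_m) ->
  fps_mul u v n = (p * q)`_n.
Proof.
move=> hu hv; rewrite coefM /fps_mul; apply: eq_bigr => [[k hk]] _ /=.
by rewrite hu ?hv // ?leq_subr // -ltnS.
Qed.

Lemma coefP N f m : (m < N)%N -> f m = (P N f)`_m.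
Proof. by move=> h; rewrite coef_poly h. Qed.

Lemma fps_mulA : associative fps_mul.
Proof.
move=> f g h; apply: fps_ext => n.
rewrite (@mul_coef _ _ (P n.+1 f) (P n.+1 g * P n.+1 h)); last first.
- by move=> m hm; apply: mul_coef => j hj; apply: coefP; apply: leq_ltn_trans hj _.
- by move=> m hm; apply: coefP.
rewrite (@mul_coef _ _ (P n.+1 f * P n.+1 g) (P n.+1 h)) ?mulrA //.
- by move=> m hm; apply: mul_coef => j hj; apply: coefP; apply: leq_ltn_trans hj _.
- by move=> m hm; apply: coefP.
Qed.

Lemma mulP f g n : fps_mul f g n = (P n.+1 f * P n.+1 g)`_n.
Proof. by apply: mul_coef => m hm; apply: coefP. Qed.

Lemma fps_mulC : commutative fps_mul.
Proof. by move=> f g; apply: fps_ext => n; rewrite !mulP mulrC. Qed.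

Lemma fps_mul1 : left_id fps_one fps_mul.
Proof.
move=> f; apply: fps_ext => n.
rewrite (@mul_coef _ _ 1 (P n.+1 f)).
- by rewrite mul1r -coefP.
- by move=> m hm; rewrite coef1 /fps_one; case: (m == 0%N).
- by move=> m hm; apply: coefP.
Qed.

Lemma fps_mulDl : left_distributive fps_mul fps_add.
Proof.
move=> f g h; apply: fps_ext => n.
by rewrite /fps_mul /fps_add -big_split /=; apply: eq_bigr => i _; rewrite mulrDl.
Qed.

Lemma fps_one_neq0 : fps_one != (0 : fps).
Proof.
apply/eqP => /(congr1 (fun f : fps => f 0%N)); rewrite /fps_one /=.
move/eqP; rewrite oner_eq0 //.
Qed.

HB.instance Definition _ := GRing.Zmodule_isComNzRing.Build fps fps_mulA fps_mulC fps_mul1 fps_mulDl fps_one_neq0.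

Lemma addE (f g : fps) n : (f + g) n = f n + g n. Proof. by []. Qed.
Lemma oppE (f : fps) n : (- f) n = - f n. Proof. by []. Qed.
Lemma mulE (f g : fps) : fps_mul f g = f * g. Proof. by []. Qed.
Lemma oneE : fps_one = 1. Proof. by []. Qed.
Lemma addfE : fps_add = +%R. Proof. by []. Qed.
Lemma oppfE : fps_opp = -%R. Proof. by []. Qed.
Lemma natmulE (f : fps) k n : (f *+ k) n = f n *+ k.
Proof. by elim: k => [|k IH]; rewrite ?mulr0n // !mulrS addE IH. Qed.
Lemma powE (f : fps) j : fps_pow f j = f ^+ j.
Proof. by elim: j => [|j IH] //; rewrite exprS -IH. Qed.
Lemma scaleE c f : fps_scale c f = fps_const c * f.
Proof.
apply: fps_ext => n; rewrite -mulE /fps_mul big_ord_recl /= /fps_const /= subn0.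
rewrite big1 ?addr0 // => i _; by rewrite mul0r.
Qed.
Lemma constE c (f : fps) n : (fps_const c * f) n = c * f n.
Proof. by rewrite -scaleE. Qed.

Definition D (f : fps) : fps := fun n => (n.+1)%:R * f n.+1.

Lemma DD f g : D (f + g) = D f + D g.
Proof. by apply: fps_ext => n; rewrite /D !addE mulrDr. Qed.
Lemma DN f : D (- f) = - D f.
Proof. by apply: fps_ext => n; rewrite /D !oppE mulrN. Qed.
Lemma D1 : D 1 = 0.
Proof. by apply: fps_ext => n; rewrite /D -oneE /fps_one /= mulr0. Qed.

Lemma DM f g : D (f * g) = D f * g + f * D g.
Proof.
apply: fps_ext => n; rewrite addE /D.
have -> : (f * g) n.+1 = (P n.+2 f * P n.+2 g)`_n.+1.
  by apply: mul_coef => m hm; apply: coefP.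
rewrite mulr_natl -coef_deriv derivM coefD; congr (_ + _); symmetry; apply: (@mul_coef (D f) g) => m hm || apply: (@mul_coef f (D g)) => m hm.
- by rewrite /D coef_deriv -coefP ?mulr_natl // !ltnS; apply: leq_trans hm _.
- by apply: coefP; rewrite ltnS; apply: leq_trans hm _.
- by apply: coefP; rewrite ltnS; apply: leq_trans hm _.
- by rewrite /D coef_deriv -coefP ?mulr_natl // !ltnS; apply: leq_trans hm _.
Qed.

Lemma DX f k : D (f ^+ k.+1) = (f ^+ k * D f) *+ k.+1.
Proof.
elim: k => [|k IH]; first by rewrite expr1 expr0 mul1r.
rewrite exprS DM IH exprS.
rewrite -mulr_natr -[_ *+ k.+2]mulr_natr.
ring.
Qed.

Lemma gfactS c a n : gfact c a n.+1 = c * gfact (c - a) a n.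
Proof.
rewrite /gfact big_ord_recl /= mul0r subr0; congr (_ * _).
apply: eq_bigr => i _ /=; rewrite /bump /= add1n -addn1 natrD; ring.
Qed.

Lemma Eser0 a c : Eser a c 0%N = 1.
Proof. by rewrite /Eser /gfact big_ord0 /= divr1. Qed.

Lemma DE a c : D (Eser a c) = fps_const c * Eser a (c - a).
Proof.
apply: fps_ext => n; rewrite constE /D /Eser gfactS factS natrM.
have h1 : (n.+1)%:R != 0 :> algC by rewrite pnatr_eq0.
have h2 : (n`!)%:R != 0 :> algC by rewrite pnatr_eq0 -lt0n fact_gt0.
by field; rewrite h2 nat1r h1.
Qed.

Lemma mul_congr (u v w : fps) n : (forall m, (m <= n)%N -> v m = w m) ->
  (u * v) n = (u * w) n.
Proof.
move=> h; rewrite -!mulE /fps_mul; apply: eq_bigr => [[k hk]] _ /=.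
by rewrite h // leq_subr.
Qed.

Lemma sumE (N : nat) (F : nat -> fps) n : (\sum_(i < N) F i) n = \sum_(i < N) F i n.
Proof. by elim/big_rec2: _ => // i y1 y2 _ <-. Qed.

Lemma tele (h : fps) N : (1 - h) * \sum_(j < N) h ^+ j = 1 - h ^+ N.
Proof.
elim: N => [|N IH]; first by rewrite big_ord0 mulr0 expr0 subrr.
rewrite big_ord_recr /= mulrDr IH exprS; ring.
Qed.

Lemma inv_ok (G : fps) : G 0%N = 1 -> G * fps_inv G = 1.
Proof.
move=> G0.
pose h := fps_add fps_one (fps_opp (fps_scale (G 0%N)^-1 G)).
have hE : h = 1 - G.
  rewrite /h G0 invr1 addfE oppfE oneE; congr (_ - _).
  by apply: fps_ext => n; rewrite /fps_scale mul1r.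
have h0 : h 0%N = 0 by rewrite hE addE oppE G0 subrr.
have hpow : forall j n, (n < j)%N -> (h ^+ j) n = 0.
  elim=> [|j IH] n //.
  move=> hn; rewrite exprS -mulE /fps_mul big1 // => [[k hk]] _ /=.
  case: k hk => [|k] hk; first by rewrite h0 mul0r.
  by rewrite IH ?mulr0 //; lia.
have invS : forall n N, (n < N)%N -> fps_inv G n = (\sum_(j < N) h ^+ j) n.
  move=> n N; elim: N => [//|N IH]; rewrite ltnS leq_eqVlt => /orP [/eqP <-|hN].
    rewrite sumE /fps_inv /= -/h G0 invr1 mul1r; apply: eq_bigr => i _.
    by rewrite powE.
  by rewrite big_ord_recr /= addE -IH // hpow // addr0.
apply: fps_ext => n.
rewrite (@mul_congr _ _ (\sum_(j < n.+1) h ^+ j)); last first.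
  by move=> m hm; apply: invS; rewrite ltnS.
have -> : G = 1 - h by rewrite hE; ring.
by rewrite tele addE oppE hpow // subr0.
Qed.

Lemma main_gen (lam : nat) (x a b c : algC) n :
  Tnum lam x a b c n.+1 =
    c * Tnum lam x a b (c - a) n
  + x * b * lam%:R *
      \sum_(k < n.+1) 'C(n, k)%:R * Tnum lam x a b c k
                        * Tnum 1 x a b (b - a) (n - k)%N.
Proof.
rewrite /Tnum.
set G := fps_add fps_one _.
set I := fps_inv G.
have G0 : G 0%N = 1.
  by rewrite /G addfE oppfE oneE scaleE addE oppE constE addE oppE Eser0 subrr mulr0 subr0.
have GI : G * I = 1 by apply: inv_ok.
have DG : D G = - (fps_const x * (fps_const b * Eser a (b - a))).
  rewrite /G addfE oppfE oneE scaleE DD D1 add0r DN DM DD DN D1 oppr0 addr0 DE.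
  have -> : D (fps_const x) = 0.
    by apply: fps_ext => m; rewrite /D /fps_const /= mulr0.
  by rewrite mul0r add0r.
clearbody I G.
have DI : D I = - (D G * I * I).
  have : D (G * I) = 0 by rewrite GI D1.
  rewrite DM => /eqP; rewrite addr_eq0 => /eqP h.
  by rewrite h mulNr opprK mulrAC GI mul1r.
have DIX : D (I ^+ lam) = - (I ^+ lam * I * D G) *+ lam.
  case: lam => [|l]; first by rewrite expr0 D1 mulr0n.
  by rewrite (DX I l) DI; congr (_ *+ _); rewrite exprS; ring.
have DF : D (Eser a c * I ^+ lam) =
   fps_const c * (Eser a (c - a) * I ^+ lam) +
   (fps_const x * (fps_const b * ((Eser a c * I ^+ lam) * (Eser a (b - a) * I)))) *+ lam.
  rewrite (DM (Eser a c)) DE DIX DG mulrnAr; congr (_ + _); first ring.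
  congr (_ *+ _); ring.
rewrite !powE expr1 !mulE.
have -> : n.+1`!%:R * (Eser a c * I ^+ lam) n.+1 = n`!%:R * D (Eser a c * I ^+ lam) n.
  by rewrite /D factS natrM mulrA (mulrC n`!%:R).
rewrite DF addE constE natmulE constE constE mulrDr mulrCA; congr (_ + _).
have key : n`!%:R * ((Eser a c * I ^+ lam) * (Eser a (b - a) * I)) n =
    \sum_(k < n.+1) 'C(n, k)%:R * (k`!%:R * (Eser a c * I ^+ lam) k) *
       ((n - k)`!%:R * (Eser a (b - a) * I) (n - k)%N).
  rewrite -mulE /fps_mul mulr_sumr; apply: eq_bigr => [[k hk]] _ /=.
  by rewrite -(@bin_fact n k) // !natrM; ring.
by rewrite -key -mulr_natr; ring.
Qed.

Theorem theorem9 (alpha beta gamma lambda x : nat)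
  (hnz : (alpha, beta, gamma, lambda, x) <> (0%N, 0%N, 0%N, 0%N, 0%N)) (n : nat) :
  Tnum lambda x%:R alpha%:R beta%:R gamma%:R n.+1 =
    gamma%:R * Tnum lambda x%:R alpha%:R beta%:R (gamma%:R - alpha%:R) n
  + x%:R * beta%:R * lambda%:R *
      \sum_(k < n.+1) 'C(n, k)%:R * Tnum lambda x%:R alpha%:R beta%:R gamma%:R k
                        * Tnum 1 x%:R alpha%:R beta%:R (beta%:R - alpha%:R) (n - k)%N.
Proof. exact: main_gen. Qed.
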